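(* On the set $\{(u,W):\|W\|_2^2\le B_W^2,\ u_i\le B_u \text{ for all } i\}$, the function $f(u,W)$ is strongly convex with strong convexity constant at least $\min\{\exp(-B_u),\mu\}$.
   Context: Data: $(y_i,x_i)$, $i=1,\dots,N$, $x_i\in\mathbb{R}^D$, $y_i\in\{1,\dots,K\}$, $K\ge 2$; $\mu>0$; $u\in\mathbb{R}^N$, $W=[w_1,\dots,w_K]\in\mathbb{R}^{D\times K}$ with Frobenius norm $\|W\|_2$; $$f(u,W)=\sum_{i=1}^N\Big[u_i+e^{-u_i}+\sum_{k\ne y_i}e^{x_i^\top(w_k-w_{y_i})-u_i}\Big]+\tfrac{\mu}{2}\|W\|_2^2.$$ $B_W^2=\frac{2}{\mu}N\log K$, $B_x=\max_i\|x_i\|_2$, $B_u=\log(1+(K-1)e^{2B_xB_W})$. *)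

(* Defs.v *)
From mathcomp Require Import all_boot all_order all_algebra.
From mathcomp Require Import all_classical all_reals all_analysis.
Set Implicit Arguments. Unset Strict Implicit. Unset Printing Implicit Defensive.
Import Order.TTheory GRing.Theory Num.Theory.
Local Open Scope ring_scope.

Section Defs.
Variables (R : realType) (N D K : nat).

(* data: x : 'I_N -> R^D (x i d = d-th coordinate of x_i), labels y : 'I_N -> 'I_K;
   W : D x K matrix whose k-th column is w_k *)

Definition margin (x : 'I_N -> 'I_D -> R) (y : 'I_N -> 'I_K)
  (W : 'M[R]_(D, K)) (i : 'I_N) (k : 'I_K) : R :=
  \sum_(d < D) x i d * (W d k - W d (y i)).

Definition frob2 (W : 'M[R]_(D, K)) : R := \sum_(d < D) \sum_(k < K) W d k ^+ 2.

Definition unorm2 (u : 'I_N -> R) : R := \sum_(i < N) u i ^+ 2.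

Definition f_obj (mu : R) (x : 'I_N -> 'I_D -> R) (y : 'I_N -> 'I_K)
  (u : 'I_N -> R) (W : 'M[R]_(D, K)) : R :=
  \sum_(i < N) (u i + expR (- u i)
      + \sum_(k < K | k != y i) expR (margin x y W i k - u i))
  + mu / 2 * frob2 W.

Definition BW2 (mu : R) : R := 2 / mu * N%:R * ln K%:R.
Definition BW (mu : R) : R := Num.sqrt (BW2 mu).
Definition Bx (x : 'I_N -> 'I_D -> R) : R :=
  \big[Num.max/0]_(i < N) Num.sqrt (\sum_(d < D) x i d ^+ 2).
Definition Bu (mu : R) (x : 'I_N -> 'I_D -> R) : R :=
  ln (1 + (K%:R - 1) * expR (2 * Bx x * BW mu)).

Definition feasible (mu : R) (x : 'I_N -> 'I_D -> R) (u : 'I_N -> R)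
  (W : 'M[R]_(D, K)) : Prop :=
  frob2 W <= BW2 mu /\ forall i, u i <= Bu mu x.

Definition strongly_convex_on (S : ('I_N -> R) -> 'M[R]_(D, K) -> Prop)
  (F : ('I_N -> R) -> 'M[R]_(D, K) -> R) (m : R) : Prop :=
  forall u1 W1 u2 W2 (t : R), S u1 W1 -> S u2 W2 -> 0 <= t <= 1 ->
    F (fun i => t * u1 i + (1 - t) * u2 i) (t *: W1 + (1 - t) *: W2)
    <= t * F u1 W1 + (1 - t) * F u2 W2
       - m / 2 * t * (1 - t) *
         (unorm2 (fun i => u1 i - u2 i) + frob2 (W1 - W2)).

End Defs.

(* Main.v *)
Require Import Defs.
From mathcomp Require Import all_boot all_order all_algebra.
From mathcomp Require Import all_classical all_reals all_analysis.
From mathcomp Require Import ring lra.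
Import Order.TTheory GRing.Theory Num.Theory numFieldNormedType.Exports.
Local Open Scope ring_scope.

Section S.
Variable R : realType.
Definition g : R -> R^o := fun z => expR z - 2^-1 * (z * z).
Lemma Dg (z : R) : is_derive z 1 g (expR z - z).
Proof.
have -> : g = (expR : R -> R^o) - (2^-1 \*: (@id R^o * @id R^o)).
  by apply/funext => w.
apply: is_derive_eq.
rewrite /GRing.scale /= !mulr1; congr (_ - _); lra.
Qed.
Lemma DgE : 'D_1 g = (fun z => expR z - z).
Proof. by apply/funext => z; rewrite (@derive_val _ _ _ _ _ _ _ (Dg z)). Qed.
Lemma DDg (z : R) : is_derive z 1 ('D_1 g) (expR z - 1).
Proof.
rewrite DgE.
have -> : (fun z : R => expR z - z : R^o) = (expR : R -> R^o) - (@id R^o).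
  by apply/funext => w.
by apply: is_derive_eq.
Qed.

Local Open Scope convex_scope.
Lemma g_conv (t : {i01 R}) (a b : R^o) : 0 <= a -> 0 <= b ->
  g (a <| t |> b) <= (g a : R^o) <| t |> (g b : R^o).
Proof.
move=> a0 b0.
have cg (z : R^o) : {for z, continuous g}.
  apply: differentiable_continuous; apply/derivable1_diffP. exact: (@ex_derive _ _ _ _ _ _ _ (Dg z)).
have DD x : 0 < x -> 0 <= 'D_1 ('D_1 g) x.
  move=> x0; rewrite (@derive_val _ _ _ _ _ _ _ (DDg x)) subr_ge0; rewrite -expR0 ler_expR; exact: ltW.
have HD z : derivable g z 1 by exact: (@ex_derive _ _ _ _ _ _ _ (Dg z)).
have HDD z : derivable ('D_1 g) z 1 by exact: (@ex_derive _ _ _ _ _ _ _ (DDg z)).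
have [ab|/ltW ba] := leP a b.
- apply: second_derivative_convex => //.
  + by move=> x /andP[ax _]; apply: DD; apply: le_lt_trans ax.
  + exact/cvg_at_left_filter/cg.
  + exact/cvg_at_right_filter/cg.
- rewrite convC [leRHS]convC; apply: second_derivative_convex => //.
  + by move=> x /andP[ax _]; apply: DD; apply: le_lt_trans ax.
  + exact/cvg_at_left_filter/cg.
  + exact/cvg_at_right_filter/cg.
Qed.
Local Close Scope convex_scope.

Lemma g_conv' (t a b : R) : 0 <= t -> t <= 1 -> 0 <= a -> 0 <= b ->
  g (t * a + (1 - t) * b) <= t * g a + (1 - t) * g b.
Proof.
move=> t0 t1 a0 b0; have := @g_conv (Itv01 t0 t1) a b a0 b0.
by rewrite !convRE.
Qed.

Lemma exp_conv (t a b : R) : 0 <= t -> t <= 1 ->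
  expR (t * a + (1 - t) * b) <= t * expR a + (1 - t) * expR b.
Proof.
move=> t0 t1; have := convex_expR (Itv01 t0 t1) a b.
by rewrite !convRE.
Qed.

Lemma expN_sc (B t a b : R) : 0 <= t -> t <= 1 -> a <= B -> b <= B ->
  expR (- (t * a + (1 - t) * b)) <= t * expR (- a) + (1 - t) * expR (- b)
    - expR (- B) / 2 * t * (1 - t) * (a - b) ^+ 2.
Proof.
move=> t0 t1 aB bB.
have := @g_conv' t (B - a) (B - b) t0 t1.
rewrite !subr_ge0 => /(_ aB bB) H.
have E0 : 0 <= expR (- B) by apply: expR_ge0.
have := ler_wpM2l E0 H.
rewrite /g.
have e1 : expR (- B) * expR (t * (B - a) + (1 - t) * (B - b)) = expR (- (t * a + (1 - t) * b)).
  by rewrite -expRD; congr expR; ring.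
have e2 : expR (- B) * expR (B - a) = expR (- a) by rewrite -expRD; congr expR; ring.
have e3 : expR (- B) * expR (B - b) = expR (- b) by rewrite -expRD; congr expR; ring.
move: e1 e2 e3.
set E := expR (- B); set X := expR (t * _ + _); set Y1 := expR (B - a); set Y2 := expR (B - b).
set Z := expR (- (_ + _)); set Z1 := expR (- a); set Z2 := expR (- b).
move=> e1 e2 e3 Hm.
have -> : Z = E * X by rewrite e1.
have -> : Z1 = E * Y1 by rewrite e2.
have -> : Z2 = E * Y2 by rewrite e3.
rewrite /g in Hm |- *; lra.
Qed.

End S.

Lemma frob2_conv (R : realType) (D K : nat) (t : R) (W1 W2 : 'M[R]_(D, K)) :
  frob2 (t *: W1 + (1 - t) *: W2) =
  t * frob2 W1 + (1 - t) * frob2 W2 - t * (1 - t) * frob2 (W1 - W2).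
Proof.
rewrite /frob2 !mulr_sumr -big_split -sumrB /=; apply: eq_bigr => d _.
rewrite !mulr_sumr -big_split -sumrB /=; apply: eq_bigr => k _.
rewrite !mxE; ring.
Qed.

Lemma frob2_ge0 (R : realType) (D K : nat) (W : 'M[R]_(D, K)) : 0 <= frob2 W.
Proof. by apply: sumr_ge0 => d _; apply: sumr_ge0 => k _; apply: sqr_ge0. Qed.

Lemma margin_conv (R : realType) (N D K : nat) (x : 'I_N -> 'I_D -> R)
  (y : 'I_N -> 'I_K) (t : R) (W1 W2 : 'M[R]_(D, K)) i k :
  margin x y (t *: W1 + (1 - t) *: W2) i k =
  t * margin x y W1 i k + (1 - t) * margin x y W2 i k.
Proof.
rewrite /margin !mulr_sumr -big_split /=; apply: eq_bigr => d _.
rewrite !mxE; ring.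
Qed.

Theorem lemma3 (R : realType) (N D K : nat) (hK : (2 <= K)%N) (mu : R)
  (hmu : 0 < mu) (x : 'I_N -> 'I_D -> R) (y : 'I_N -> 'I_K) :
  strongly_convex_on (feasible mu x) (f_obj mu x y)
    (Num.min (expR (- Bu K mu x)) mu).
Proof.
move=> u1 W1 u2 W2 t [_ hu1] [_ hu2] /andP[t0 t1].
set B := Bu K mu x; set c := expR (- B); set m := Num.min c mu.
have mc : m <= c by rewrite /m ge_min lexx.
have mmu : m <= mu by rewrite /m ge_min lexx orbT.
have tt0 : 0 <= t * (1 - t) by apply: mulr_ge0; lra.
have Hi i : u1 i * t + (1 - t) * u2 i = t * u1 i + (1 - t) * u2 i by ring.
have Hsum i :
  \sum_(k < K | k != y i) expR (margin x y (t *: W1 + (1 - t) *: W2) i k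
        - (t * u1 i + (1 - t) * u2 i))
  <= t * \sum_(k < K | k != y i) expR (margin x y W1 i k - u1 i)
     + (1 - t) * \sum_(k < K | k != y i) expR (margin x y W2 i k - u2 i).
  rewrite !mulr_sumr -big_split /=; apply: ler_sum => k _.
  rewrite margin_conv.
  have -> : t * margin x y W1 i k + (1 - t) * margin x y W2 i k
      - (t * u1 i + (1 - t) * u2 i)
    = t * (margin x y W1 i k - u1 i) + (1 - t) * (margin x y W2 i k - u2 i) by ring.
  exact: exp_conv.
have Hu i := @expN_sc _ B t (u1 i) (u2 i) t0 t1 (hu1 i) (hu2 i).
rewrite /f_obj /unorm2 frob2_conv.
set S1 := \sum_(i < N) _; set S2 := \sum_(i < N) _; set S3 := \sum_(i < N) _.
set U := \sum_(i < N) _.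
have HS : S1 <= \sum_(i < N) (t * (u1 i + expR (- u1 i) +
        \sum_(k < K | k != y i) expR (margin x y W1 i k - u1 i))
     + (1 - t) * (u2 i + expR (- u2 i) +
        \sum_(k < K | k != y i) expR (margin x y W2 i k - u2 i))
     - c / 2 * t * (1 - t) * (u1 i - u2 i) ^+ 2).
  by apply: ler_sum => i _; have := Hsum i; have := Hu i; rewrite -/c; lra.
rewrite sumrB big_split /= -!mulr_sumr -/S2 -/S3 -/U in HS.
have U0 : 0 <= U by apply: sumr_ge0 => i _; apply: sqr_ge0.
have F0 := @frob2_ge0 _ _ _ (W1 - W2).
have P1 : m * (t * (1 - t) * U) <= c * (t * (1 - t) * U).
  by apply: ler_wpM2r => //; apply: mulr_ge0.
have P2 : m * (t * (1 - t) * frob2 (W1 - W2)) <= mu * (t * (1 - t) * frob2 (W1 - W2)).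
  by apply: ler_wpM2r => //; apply: mulr_ge0.
lra.
Qed.
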